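(* For every $w\in\mathcal{W}$, the set $D^1(w):=\operatorname{conv}(\mathcal{P}\setminus\operatorname{int}(\mathcal{C}_{\rm ID}(w)))$ is a polyhedron.
   Context: Data: $d^2\in\mathbb{Q}^{n_2}$; $A^1\in\mathbb{Q}^{m_1\times n_1}$, $G^1\in\mathbb{Q}^{m_1\times n_2}$, $b^1\in\mathbb{Q}^{m_1}$; $A^2\in\mathbb{Q}^{m_2\times n_1}$, $G^2\in\mathbb{Q}^{m_2\times n_2}$, $b^2\in\mathbb{Q}^{m_2}$; integers $0\le r_1\le n_1$, $0\le r_2\le n_2$. $\mathcal{P}=\{(x,y)\in\mathbb{R}_+^{n_1}\times\mathbb{R}_+^{n_2}: G^1y\ge b^1-A^1x,\ G^2y\ge b^2-A^2x\}$, assumed bounded. An improving direction is $w\in\mathbb{Z}^{r_2}\times\mathbb{R}^{n_2-r_2}$ with $d^2w<0$; $\mathcal{W}$ is the set of all improving directions. For $w\in\mathcal{W}$, $\mathcal{C}_{\rm ID}(w)=\{(x,y)\in\mathbb{R}^{n_1}\times\mathbb{R}^{n_2}: A^2x+G^2(y+w)\ge b^2-\mathbf{1},\ y+w\ge-\mathbf{1}\}$, where $\mathbf{1}$ denotes the all-ones vector of appropriate dimension; $\operatorname{int}$ denotes topological interior. *)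

(* Defs.v *)
From HB Require Import structures.
From mathcomp Require Import all_boot all_order all_algebra.
From mathcomp Require Import all_classical all_reals all_analysis.
Set Implicit Arguments. Unset Strict Implicit. Unset Printing Implicit Defensive.
Import Order.TTheory GRing.Theory Num.Theory.
Import numFieldNormedType.Exports.
Local Open Scope classical_set_scope.
Local Open Scope ring_scope.

Definition leV (R : realType) (k : nat) (u v : 'cV[R]_k) : Prop :=
  forall i : 'I_k, u i ord0 <= v i ord0.

Definition mxR (R : realType) (m n : nat) (A : 'M[rat]_(m, n)) : 'M[R]_(m, n) :=
  map_mx (fun q : rat => ratr q) A.
Arguments mxR {R m n} A.

Definition ones (R : realType) (k : nat) : 'cV[R]_k := const_mx 1.

Notation pt R n1 n2 := ('cV[R]_n1 * 'cV[R]_n2)%type.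

Definition Pset (R : realType) (n1 n2 m1 m2 : nat)
  (A1 : 'M[rat]_(m1, n1)) (G1 : 'M[rat]_(m1, n2)) (b1 : 'cV[rat]_m1)
  (A2 : 'M[rat]_(m2, n1)) (G2 : 'M[rat]_(m2, n2)) (b2 : 'cV[rat]_m2)
  : set (pt R n1 n2) :=
  [set p | leV 0 p.1 /\ leV 0 p.2 /\
           leV (mxR b1 - mxR A1 *m p.1) (mxR G1 *m p.2) /\
           leV (mxR b2 - mxR A2 *m p.1) (mxR G2 *m p.2)].

Definition bounded_pts (R : realType) (n1 n2 : nat) (S : set (pt R n1 n2)) : Prop :=
  exists B : R, forall p, S p ->
    (forall i, `|p.1 i ord0| <= B) /\ (forall j, `|p.2 j ord0| <= B).

Definition improving (R : realType) (n2 r2 : nat) (d2 : 'rV[rat]_n2)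
  (w : 'cV[R]_n2) : Prop :=
  (forall i : 'I_n2, (i < r2)%N -> w i ord0 \is a Num.int) /\
  (mxR d2 *m w) ord0 ord0 < 0.

Definition C_ID (R : realType) (n1 n2 m2 : nat)
  (A2 : 'M[rat]_(m2, n1)) (G2 : 'M[rat]_(m2, n2)) (b2 : 'cV[rat]_m2)
  (w : 'cV[R]_n2) : set (pt R n1 n2) :=
  [set p | leV (mxR b2 - ones R m2) (mxR A2 *m p.1 + mxR G2 *m (p.2 + w)) /\
           leV (- ones R n2) (p.2 + w)].

Definition conv_hull (R : realType) (n1 n2 : nat) (S : set (pt R n1 n2))
  : set (pt R n1 n2) :=
  [set p | exists (k : nat) (lam : 'I_k -> R) (q : 'I_k -> pt R n1 n2),
     (forall i, 0 <= lam i) /\ \sum_(i < k) lam i = 1 /\ (forall i, S (q i)) /\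
     p = (\sum_(i < k) lam i *: (q i).1, \sum_(i < k) lam i *: (q i).2)].

Definition polyhedron (R : realType) (n1 n2 : nat) (S : set (pt R n1 n2)) : Prop :=
  exists (k : nat) (M1 : 'M[R]_(k, n1)) (M2 : 'M[R]_(k, n2)) (c : 'cV[R]_k),
    S = [set p | leV (M1 *m p.1 + M2 *m p.2) c].
Arguments Pset R {n1 n2 m1 m2} A1 G1 b1 A2 G2 b2.
Arguments C_ID {R n1 n2 m2} A2 G2 b2 w.

(* Main.v *)
Require Import Defs.
From HB Require Import structures.
From mathcomp Require Import all_boot all_order all_algebra.
From mathcomp Require Import all_classical all_reals all_analysis.
From mathcomp Require Import ring lra.
From Stdlib Require List.
Set Implicit Arguments. Unset Strict Implicit. Unset Printing Implicit Defensive.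
Import Order.TTheory GRing.Theory Num.Theory.
Import numFieldNormedType.Exports.
Local Open Scope classical_set_scope.
Local Open Scope ring_scope.


Section Gen.
Variable R : realType.
Local Notation vec n := 'cV[R]_n.

Definition lin n (f : vec n -> R) := forall (a : R) x y, f (a *: x + y) = a * f x + f y.
Definition cns n := ((vec n -> R) * R)%type.
Definition hsp n (l : seq (cns n)) : set (vec n) :=
  [set x | forall p, List.In p l -> p.1 x <= p.2].
Definition polyh n (S : set (vec n)) :=
  exists l : seq (cns n), (forall p, List.In p l -> lin p.1) /\ S = hsp l.

Lemma lin0 n (f : vec n -> R) : lin f -> f 0 = 0.
Proof. by move=> h; have := h (-1) 0 0; rewrite scaler0 add0r mulN1r addNr. Qed.
Lemma linD n (f : vec n -> R) : lin f -> forall x y, f (x + y) = f x + f y.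
Proof. by move=> h x y; have := h 1 x y; rewrite scale1r mul1r. Qed.
Lemma linZ n (f : vec n -> R) : lin f -> forall a x, f (a *: x) = a * f x.
Proof. by move=> h a x; have := h a x 0; rewrite !addr0 (lin0 h) addr0. Qed.

Definition linmap m n (g : vec m -> vec n) := forall (a : R) x y, g (a *: x + y) = a *: g x + g y.

Lemma lin_comp m n (f : vec n -> R) (g : vec m -> vec n) : lin f -> linmap g -> lin (f \o g).
Proof. by move=> hf hg a x y /=; rewrite hg hf. Qed.

Lemma polyh_pre m n (S : set (vec n)) (g : vec m -> vec n) :
  polyh S -> linmap g -> polyh [set x | S (g x)].
Proof.
move=> [l [hl ->]] hg.
exists (List.map (fun p => (p.1 \o g, p.2)) l); split.
  move=> p /List.in_map_iff [q [<- qi]] /=; exact: lin_comp (hl _ qi) hg.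
rewrite /hsp; apply/seteqP; split => x /= H.
  move=> p /List.in_map_iff [q [<- qi]] /=; exact: H.
by move=> p pi; apply: (H (p.1 \o g, p.2)); apply/List.in_map_iff; exists p.
Qed.

Lemma polyhI n (S T : set (vec n)) : polyh S -> polyh T -> polyh (S `&` T).
Proof.
move=> [l1 [h1 ->]] [l2 [h2 ->]]; exists (l1 ++ l2); split.
  by move=> p /List.in_app_iff [/h1|/h2].
rewrite /hsp; apply/seteqP; split => x /=.
  by move=> [H1 H2] p /List.in_app_iff [/H1|/H2].
by move=> H; split => p pi; apply: H; apply/List.in_app_iff; [left|right].
Qed.

Lemma polyh0 n : polyh (@set0 (vec n)).
Proof.
exists [:: (fun _ => 0, -1)]; split; first by move=> p [<-|[]] a x y /=; rewrite mulr0 addr0.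
apply/seteqP; split => x //= H; have := H _ (or_introl erefl) => /=; lra.
Qed.

Lemma polyhT n : polyh (@setT (vec n)).
Proof.
exists [::]; split => //; apply/seteqP; split => x //= H p [].
Qed.

Lemma sep_lb (T : Type) (l : seq T) (U : T -> R) (PU : pred T) :
  exists t, forall q, List.In q l -> PU q -> t <= U q.
Proof.
elim: l => [|a l [t Ht]]; first by exists 0.
exists (if PU a then Num.min t (U a) else t) => q [<-|ql] Pq.
  by rewrite Pq ge_min lexx orbT.
case: (PU a); last exact: Ht.
by rewrite ge_min Ht.
Qed.

Lemma sep (T : Type) (l1 l2 : seq T) (L U : T -> R) (PL PU : pred T) :
  (forall p q, List.In p l1 -> List.In q l2 -> PL p -> PU q -> L p <= U q) ->
  exists t, (forall p, List.In p l1 -> PL p -> L p <= t) /\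
            (forall q, List.In q l2 -> PU q -> t <= U q).
Proof.
elim: l1 => [|a l IH] H.
  have [t Ht] := sep_lb l2 U PU.
  exists t; split => //.
have H' : forall p q, List.In p l -> List.In q l2 -> PL p -> PU q -> L p <= U q.
  by move=> p q pl ql; apply: H => //=; right.
have [t [H1 H2]] := IH H'.
exists (if PL a then Num.max t (L a) else t); split.
  move=> p [<-|pl] Pp; first by rewrite Pp le_max lexx orbT.
  by case: (PL a); [rewrite le_max H1 |apply: H1].
move=> q ql Pq; case Pa: (PL a); last exact: H2.
by rewrite ge_max H2 // H //; left.
Qed.

Definition pt1 n (t : R) (x : vec n) : vec (1 + n) := col_mx (const_mx t) x.

Lemma pt1E n (z : vec (1 + n)) : z = pt1 (usubmx z ord0 ord0) (dsubmx z).
Proof.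
rewrite -{1}(vsubmxK z) /pt1; congr col_mx; apply/matrixP => i j.
by rewrite [const_mx _ _ _]mxE [i]ord1 [j]ord1.
Qed.

Lemma lin_pt1 n (f : vec (1 + n) -> R) : lin f -> forall t x,
  f (pt1 t x) = t * f (pt1 1 0) + f (pt1 0 x).
Proof.
move=> hf t x.
have -> : pt1 t x = t *: pt1 1 0 + pt1 0 x.
  rewrite /pt1 scale_col_mx add_col_mx scaler0 add0r; congr col_mx.
  by apply/matrixP => i j; rewrite !mxE mulr1 addr0.
by rewrite hf.
Qed.

Lemma lin_pt0 n (f : vec (1 + n) -> R) : lin f -> lin (fun x : vec n => f (pt1 0 x)).
Proof.
move=> hf a x y /=; rewrite -hf; congr f.
rewrite /pt1 scale_col_mx add_col_mx; congr col_mx.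
by apply/matrixP => i j; rewrite !mxE mulr0 addr0.
Qed.

Definition alpha n (p : cns (1 + n)) := p.1 (pt1 1 0).
Definition psi n (p : cns (1 + n)) (x : vec n) := p.1 (pt1 0 x).

Definition fm1 n (p : cns (1 + n)) : cns n :=
  if alpha p == 0 then (psi p, p.2) else (fun _ => 0, 1).
Definition fm2 n (p q : cns (1 + n)) : cns n :=
  if (0 < alpha p) && (alpha q < 0) then
    (fun x => alpha p * psi q x - alpha q * psi p x, alpha p * q.2 - alpha q * p.2)
  else (fun _ => 0, 1).
Definition fm n (l : seq (cns (1 + n))) : seq (cns n) :=
  List.map (@fm1 n) l ++ List.flat_map (fun p => List.map (fm2 p) l) l.

Lemma lin_zero n : lin (fun _ : vec n => 0).
Proof. by move=> a x y; rewrite mulr0 addr0. Qed.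

Lemma fm_polyh n (S : set (vec (1 + n))) : polyh S -> polyh [set dsubmx z | z in S].
Proof.
move=> [l [hl ->]]; exists (fm l); split.
  move=> p /List.in_app_iff [/List.in_map_iff [q [<- ql]]|].
    rewrite /fm1; case: ifP => _ /=; [exact: lin_pt0 (hl _ ql)|exact: lin_zero].
  move=> /List.in_flat_map [q [ql /List.in_map_iff [r [<- rl]]]].
  rewrite /fm2; case: ifP => _ /=; last exact: lin_zero.
  have h1 := lin_pt0 (hl _ ql); have h2 := lin_pt0 (hl _ rl).
  move=> a x y; rewrite /psi h1 h2; ring.
apply/seteqP; split => x /=.
  move=> [z Hz <-]; rewrite (pt1E z) in Hz; set t := usubmx z ord0 ord0 in Hz.
  have Hp : forall p, List.In p l -> t * alpha p + psi p (dsubmx z) <= p.2.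
    by move=> p pl; rewrite /alpha /psi -lin_pt1 //; [apply: Hz | apply: hl].
  move=> p /List.in_app_iff [/List.in_map_iff [q [<- ql]]|].
    rewrite /fm1; case: eqP => [a0|_] /=; last by rewrite ler01.
    by have := Hp _ ql; rewrite a0 mulr0 add0r.
  move=> /List.in_flat_map [q [ql /List.in_map_iff [r [<- rl]]]].
  rewrite /fm2; case: ifP => /=; last by rewrite ler01.
  move=> /andP [aq ar]; have := Hp _ ql; have := Hp _ rl.
  move: aq ar; set A := alpha q; set B := alpha r; set u := psi q _; set v := psi r _.
  move: t Hz Hp => t _ _ aq ar h1 h2.
  have e1 : 0 <= A * (r.2 - t * B - v) by apply: mulr_ge0; lra.
  have e2 : 0 <= (- B) * (q.2 - t * A - u) by apply: mulr_ge0; lra.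
  nra.
move=> H.
have Hf1 : forall q, List.In q l -> alpha q = 0 -> psi q x <= q.2.
  move=> q ql a0; have := H (fm1 q); rewrite /fm1 a0 eqxx /=; apply.
  by apply/List.in_app_iff; left; apply/List.in_map_iff; exists q; rewrite /fm1 a0 eqxx.
have Hf2 : forall q r, List.In q l -> List.In r l -> 0 < alpha q -> alpha r < 0 ->
    alpha q * psi r x - alpha r * psi q x <= alpha q * r.2 - alpha r * q.2.
  move=> q r ql rl aq ar; have := H (fm2 q r); rewrite /fm2 aq ar /=; apply.
  apply/List.in_app_iff; right; apply/List.in_flat_map; exists q; split => //.
  by apply/List.in_map_iff; exists r; rewrite /fm2 aq ar.
have Hpre : forall r q, List.In r l -> List.In q l -> alpha r < 0 -> 0 < alpha q ->
    (r.2 - psi r x) / alpha r <= (q.2 - psi q x) / alpha q.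
  move=> r q rl ql /= ar aq; have := Hf2 _ _ ql rl aq ar.
  rewrite ler_ndivrMr // mulrAC ler_pdivrMr //.
  move=> h; nra.
have [t [Ht1 Ht2]] := @sep _ l l (fun r => (r.2 - psi r x) / alpha r)
   (fun q => (q.2 - psi q x) / alpha q) (fun r => alpha r < 0) (fun q => 0 < alpha q) Hpre.
exists (pt1 t x); last by rewrite /pt1 col_mxKd.
move=> p pl; rewrite lin_pt1; last exact: hl.
rewrite -/(alpha p) -/(psi p x).
have [a0|/eqP an0] := eqVneq (alpha p) 0.
  by rewrite a0 mulr0 add0r; apply: Hf1.
case: (ltgtP (alpha p) 0) => [aneg|apos|//].
  have := Ht1 _ pl aneg; rewrite /= ler_ndivrMr // => h; lra.
have := Ht2 _ pl apos; rewrite /= ler_pdivlMr // => h; lra.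
Qed.

Lemma dsub2 m n (z : 'cV[R]_(m.+1 + n)) :
  @dsubmx R m n 1 (@dsubmx R 1 (m + n) 1 z) = @dsubmx R m.+1 n 1 z.
Proof. apply/matrixP => i j; rewrite !mxE; congr (z _ _); apply: val_inj => /=; by rewrite add1n addSn. Qed.

Lemma proj_polyh m n (S : set (vec (m + n))) : polyh S -> polyh [set @dsubmx R m n 1 z | z in S].
Proof.
elim: m S => [|m IH] S hS.
  have -> : [set @dsubmx R 0 n 1 z | z in S] = [set x | S (col_mx 0 x)].
    apply/seteqP; split => x /=.
      move=> [z Sz <-]; suff -> : col_mx 0 (dsubmx z) = z by [].
      by rewrite -[RHS](vsubmxK z); congr col_mx; apply/matrixP => -[].
    by move=> Sx; exists (col_mx 0 x) => //; rewrite col_mxKd.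
  apply: polyh_pre hS _ => a x y; rewrite scale_col_mx add_col_mx scaler0 addr0 //.
have := IH _ (fm_polyh hS).
suff -> : [set @dsubmx R m n 1 y | y in [set @dsubmx R 1 (m + n) 1 z | z in S]] =
          [set @dsubmx R m.+1 n 1 z | z in S] by [].
apply/seteqP; split => x /=.
  by move=> [y [z Sz <-] <-]; exists z => //; rewrite dsub2.
by move=> [z Sz <-]; exists (@dsubmx R 1 (m + n) 1 z); [exists z|rewrite dsub2].
Qed.

End Gen.


Section Gen2.
Variable R : realType.
Local Notation vec n := 'cV[R]_n.

Definition cvx n (S : set (vec n)) := forall x y t, S x -> S y -> 0 <= t -> t <= 1 ->
  S (t *: x + (1 - t) *: y).
Definition convC n (S : set (vec n)) : set (vec n) :=
  [set x | exists k (lam : 'I_k -> R) (q : 'I_k -> vec n),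
     (forall i, 0 <= lam i) /\ \sum_(i < k) lam i = 1 /\ (forall i, S (q i)) /\
     x = \sum_(i < k) lam i *: q i].

Lemma convC_sub n (S : set (vec n)) : S `<=` convC S.
Proof.
move=> x Sx; exists 1%N, (fun _ => 1), (fun _ => x); split => //.
by rewrite big_ord1 scale1r big_ord1.
Qed.

Lemma convC_min n (S T : set (vec n)) : cvx T -> S `<=` T -> convC S `<=` T.
Proof.
move=> cT ST x [k [lam [q [l0 [l1 [Sq ->]]]]]].
elim: k lam q l0 l1 Sq => [|k IH] lam q l0 l1 Sq.
  by move: l1; rewrite big_ord0 => /eqP; rewrite eq_sym oner_eq0.
rewrite big_ord_recr /=; rewrite big_ord_recr /= in l1.
set s := \sum_(i < k) lam (widen_ord (leqnSn k) i) in l1 *.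
have s0 : 0 <= s by apply: sumr_ge0.
have lm0 := l0 ord_max.
have [s0'|spos] := eqVneq s 0.
  have lz : forall i : 'I_k, lam (widen_ord (leqnSn k) i) = 0.
    by move=> i; apply: (psumr_eq0P _ s0') => // j _.
  rewrite big1; last by move=> i _; rewrite lz scale0r.
  have -> : lam ord_max = 1 by move: l1; rewrite s0' add0r.
  by rewrite add0r scale1r; apply: ST.
have sp : 0 < s by rewrite lt_def spos.
have H1 : forall i : 'I_k, 0 <= lam (widen_ord (leqnSn k) i) / s.
  by move=> i; apply: divr_ge0.
have H2 : \sum_(i < k) lam (widen_ord (leqnSn k) i) / s = 1.
  by rewrite -mulr_suml divff.
have H := IH (fun i => lam (widen_ord (leqnSn k) i) / s)
   (fun i => q (widen_ord (leqnSn k) i)) H1 H2 (fun i => Sq _).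
have s1 : s <= 1 by lra.
have := cT _ _ s H (ST _ (Sq ord_max)) s0 s1.
have -> : 1 - s = lam ord_max by rewrite -l1; ring.
rewrite scaler_sumr.
suff -> : \sum_(i < k) s *: (lam (widen_ord (leqnSn k) i) / s *: q (widen_ord (leqnSn k) i)) =
   \sum_(i < k) lam (widen_ord (leqnSn k) i) *: q (widen_ord (leqnSn k) i) by [].
by apply: eq_bigr => i _; rewrite scalerA mulrC divfK.
Qed.

Lemma convC_cvx n (S : set (vec n)) : cvx (convC S).
Proof.
move=> x y t [k1 [a [q [a0 [a1 [Sq ->]]]]]] [k2 [b [r [b0 [b1 [Sr ->]]]]]] t0 t1.
pose c (i : 'I_(k1 + k2)) := match fintype.split i with inl i => t * a i | inr j => (1 - t) * b j end.
pose p (i : 'I_(k1 + k2)) := match fintype.split i with inl i => q i | inr j => r j end.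
have sl : forall i : 'I_k1, fintype.split (lshift k2 i) = inl i by move=> i; exact: (@unsplitK k1 k2 (inl i)).
have sr : forall i : 'I_k2, fintype.split (rshift k1 i) = inr i by move=> i; exact: (@unsplitK k1 k2 (inr i)).
exists (k1 + k2)%N, c, p; split; [|split; [|split]].
- move=> i; rewrite /c; case: fintype.split => j; apply: mulr_ge0 => //; lra.
- rewrite big_split_ord /c.
  under eq_bigr do rewrite sl.
  under [X in _ + X = _]eq_bigr do rewrite sr.
  by rewrite -!mulr_sumr a1 b1; ring.
- by move=> i; rewrite /p; case: fintype.split.
- rewrite big_split_ord /c /p.
  under eq_bigr do rewrite sl.
  under [X in _ = _ + X]eq_bigr do rewrite sr.
  rewrite !scaler_sumr; congr (_ + _); apply: eq_bigr => i _; by rewrite scalerA.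
Qed.

Lemma convC_id n (S : set (vec n)) : cvx S -> convC S = S.
Proof.
move=> cS; apply/seteqP; split; [exact: convC_min | exact: convC_sub].
Qed.

Lemma lin_cvx n (f : vec n -> R) c : lin f -> cvx [set x | f x <= c].
Proof.
move=> hf x y t /= fx fy t0 t1.
rewrite (linD hf) !(linZ hf).
have e1 : t * f x <= t * c by apply: ler_wpM2l.
have e2 : (1 - t) * f y <= (1 - t) * c by apply: ler_wpM2l; lra.
lra.
Qed.

Lemma polyh_cvx n (S : set (vec n)) : polyh S -> cvx S.
Proof.
move=> [l [hl ->]] x y t Sx Sy t0 t1 p pl.
exact: (lin_cvx (c := p.2) (hl _ pl) (Sx _ pl) (Sy _ pl) t0 t1).
Qed.

Lemma linmap0 m n (g : vec m -> vec n) : linmap g -> g 0 = 0.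
Proof. by move=> h; have := h (-1) 0 0; rewrite scaler0 add0r scaleN1r addNr. Qed.
Lemma linmapD m n (g : vec m -> vec n) : linmap g -> forall x y, g (x + y) = g x + g y.
Proof. by move=> h x y; have := h 1 x y; rewrite !scale1r. Qed.
Lemma linmapZ m n (g : vec m -> vec n) : linmap g -> forall a x, g (a *: x) = a *: g x.
Proof. by move=> h a x; have := h a x 0; rewrite !addr0 (linmap0 h) addr0. Qed.

Lemma cvx_img m n (S : set (vec m)) (g : vec m -> vec n) : cvx S -> linmap g ->
  cvx [set g x | x in S].
Proof.
move=> cS hg _ _ t [x Sx <-] [y Sy <-] t0 t1.
exists (t *: x + (1 - t) *: y); first exact: cS.
by rewrite hg (linmapZ hg).
Qed.

End Gen2.


Section Gen3.
Variable R : realType.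
Local Notation vec n := 'cV[R]_n.

Definition bnd n (S : set (vec n)) := exists B : R, forall x, S x -> forall i, `|x i ord0| <= B.

Lemma recess n (l : seq (cns R n)) (p u : vec n) : (forall q, List.In q l -> lin q.1) ->
  hsp l p -> bnd (hsp l) -> (forall q, List.In q l -> q.1 u <= 0) -> u = 0.
Proof.
move=> hl Pp [B HB] Hu; apply/matrixP => i j; rewrite [j]ord1 mxE.
apply/eqP; apply/negPn/negP => un0.
have Bp : `|p i ord0| <= B := HB _ Pp i.
have un : 0 < `|u i ord0| by rewrite normr_gt0.
set t := (B + `|p i ord0| + 1) / `|u i ord0|.
have t0 : 0 <= t by apply: divr_ge0 => //; have := normr_ge0 (p i ord0); lra.
have Py : hsp l (t *: u + p).
  move=> q ql /=; rewrite (hl _ ql); have := Hu _ ql; have := Pp _ ql.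
  have : 0 <= t * - q.1 u by apply: mulr_ge0 => //; have := Hu _ ql; lra.
  lra.
have := HB _ Py i; rewrite !mxE.
have e : `|t * u i ord0| = B + `|p i ord0| + 1.
  by rewrite normrM ger0_norm // divfK // gt_eqF.
have := ler_normB (t * u i ord0 + p i ord0) (p i ord0).
rewrite addrK e; lra.
Qed.

Lemma bnd_sub n (S T : set (vec n)) : S `<=` T -> bnd T -> bnd S.
Proof. by move=> ST [B HB]; exists B => x /ST; apply: HB. Qed.

Lemma bnd_conv n (S : set (vec n)) : bnd S -> bnd (convC S).
Proof.
move=> [B HB]; exists B; apply: (@convC_min _ _ _ [set x | forall i, `|x i ord0| <= B]) => //.
move=> x y t /= Hx Hy t0 t1 i; rewrite !mxE.
have := ler_normD (t * x i ord0) ((1 - t) * y i ord0).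
have h : 0 <= 1 - t by lra.
rewrite !normrM (ger0_norm t0) (ger0_norm h).
have := ler_wpM2l t0 (Hx i); have := ler_wpM2l h (Hy i); lra.
Qed.

Lemma bnd_U n (Ps : seq (set (vec n))) : (forall P, List.In P Ps -> bnd P) ->
  bnd [set x | exists P, List.In P Ps /\ P x].
Proof.
elim: Ps => [|P Ps IH] H.
  by exists 0 => x /= [P [[]]].
have [B1 H1] := H P (or_introl erefl).
have [|B2 H2] := IH; first by move=> Q Q1; apply: H; right.
exists (Num.max B1 B2) => x /= [Q [[<-|QP] Qx]] i.
  by rewrite le_max H1.
by rewrite le_max (H2 x) ?orbT //; exists Q.
Qed.

Lemma convC_congr n (A B : set (vec n)) : convC (A `|` B) = convC (A `|` convC B).
Proof.
apply/seteqP; split.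
  apply: convC_min; first exact: convC_cvx.
  move=> x [Ax|Bx]; apply: convC_sub; [left|right] => //; exact: convC_sub.
apply: convC_min; first exact: convC_cvx.
move=> x [Ax|]; first by apply: convC_sub; left.
apply: convC_min; first exact: convC_cvx.
by move=> y By; apply: convC_sub; right.
Qed.

Lemma polyh_bigI n (T : Type) (l : seq T) (S : T -> set (vec n)) :
  (forall q, List.In q l -> polyh (S q)) -> polyh [set x | forall q, List.In q l -> S q x].
Proof.
elim: l => [|a l IH] H.
  have -> : [set x : vec n | forall q, List.In q [::] -> S q x] = setT.
    by apply/seteqP; split => x //= _ q [].
  exact: polyhT.
have -> : [set x | forall q, List.In q (a :: l) -> S q x] =
   S a `&` [set x | forall q, List.In q l -> S q x].
  apply/seteqP; split => x /=.
    by move=> Hx; split; [apply: Hx; left | move=> q ql; apply: Hx; right].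
  by move=> [Sa Hx] q [<-|ql] //; apply: Hx.
apply: polyhI; first by apply: H; left.
by apply: IH => q ql; apply: H; right.
Qed.

Lemma polyh_le n (f : vec n -> R) c : lin f -> polyh [set x | f x <= c].
Proof.
move=> hf; exists [:: (f, c)]; split; first by move=> p [<-|[]].
apply/seteqP; split => x /=; first by move=> H p [<-|[]].
by move=> H; apply: (H (f, c)); left.
Qed.

Lemma linmap_comp k m n (f : vec m -> vec n) (g : vec k -> vec m) :
  linmap f -> linmap g -> linmap (f \o g).
Proof. by move=> hf hg a x y /=; rewrite hg hf. Qed.

Lemma linmap_usub m n : linmap (@usubmx R m n 1).
Proof. by move=> a x y; rewrite linearP. Qed.
Lemma linmap_dsub m n : linmap (@dsubmx R m n 1).
Proof. by move=> a x y; rewrite linearP. Qed.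
Lemma linmapB m n (f g : vec m -> vec n) : linmap f -> linmap g -> linmap (fun x => f x - g x).
Proof. by move=> hf hg a x y; rewrite hf hg scalerBr; rewrite addrACA opprD. Qed.

Lemma lin_entry n : lin (fun x : vec (1 + n) => usubmx x ord0 ord0).
Proof. by move=> a x y; rewrite linearP !mxE. Qed.

Lemma lin_add n (f g : vec n -> R) : lin f -> lin g -> lin (fun x => f x + g x).
Proof. by move=> hf hg a x y; rewrite hf hg; ring. Qed.
Lemma lin_scal n (f : vec n -> R) c : lin f -> lin (fun x => c * f x).
Proof. by move=> hf a x y; rewrite hf; ring. Qed.

End Gen3.


Section Gen4.
Variable R : realType.
Local Notation vec n := 'cV[R]_n.

Definition lz n (z : vec ((1 + n) + n)) : R := @usubmx R 1 n 1 (@usubmx R (1 + n) n 1 z) ord0 ord0.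
Definition uz n (z : vec ((1 + n) + n)) : vec n := @dsubmx R 1 n 1 (@usubmx R (1 + n) n 1 z).
Definition xz n (z : vec ((1 + n) + n)) : vec n := @dsubmx R (1 + n) n 1 z.
Definition mkz n (t : R) (u x : vec n) : vec ((1 + n) + n) := col_mx (pt1 t u) x.

Lemma lz_mk n t (u x : vec n) : lz (mkz t u x) = t.
Proof. by rewrite /lz /mkz col_mxKu /pt1 col_mxKu mxE. Qed.
Lemma uz_mk n t (u x : vec n) : uz (mkz t u x) = u.
Proof. by rewrite /uz /mkz col_mxKu /pt1 col_mxKd. Qed.
Lemma xz_mk n t (u x : vec n) : xz (mkz t u x) = x.
Proof. by rewrite /xz /mkz col_mxKd. Qed.

Lemma lin_lz n : lin (@lz n).
Proof. exact: (lin_comp (@lin_entry R n) (@linmap_usub R (1 + n) n)). Qed.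
Lemma linmap_uz n : linmap (@uz n).
Proof. exact: (linmap_comp (@linmap_dsub R 1 n) (@linmap_usub R (1 + n) n)). Qed.
Lemma linmap_xz n : linmap (@xz n).
Proof. exact: (@linmap_dsub R (1 + n) n). Qed.

Lemma conv2 n (l1 l2 : seq (cns R n)) :
  (forall q, List.In q l1 -> lin q.1) -> (forall q, List.In q l2 -> lin q.1) ->
  bnd (hsp l1) -> bnd (hsp l2) -> polyh (convC (hsp l1 `|` hsp l2)).
Proof.
move=> hl1 hl2 b1 b2.
have ph1 : polyh (hsp l1) by exists l1.
have ph2 : polyh (hsp l2) by exists l2.
have [[p1 P1p]|P1e] := pselect (exists p, hsp l1 p); last first.
  have -> : hsp l1 `|` hsp l2 = hsp l2.
    apply/seteqP; split => x; last by right.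
    by move=> [H|//]; exfalso; apply: P1e; exists x.
  by rewrite convC_id //; apply: polyh_cvx.
have [[p2 P2p]|P2e] := pselect (exists p, hsp l2 p); last first.
  have -> : hsp l1 `|` hsp l2 = hsp l1.
    apply/seteqP; split => x; last by left.
    by move=> [//|H]; exfalso; apply: P2e; exists x.
  by rewrite convC_id //; apply: polyh_cvx.
pose A1 := [set z : vec ((1 + n) + n) | forall q, List.In q l1 -> q.1 (uz z) + (- q.2) * lz z <= 0].
pose A2 := [set z : vec ((1 + n) + n) | forall q, List.In q l2 -> q.1 (xz z - uz z) + q.2 * lz z <= q.2].
pose A3 := [set z : vec ((1 + n) + n) | (-1) * lz z <= 0].
pose A4 := [set z : vec ((1 + n) + n) | lz z <= 1].
have pL : polyh (A1 `&` A2 `&` (A3 `&` A4)).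
  apply: polyhI; first apply: polyhI.
  - apply: polyh_bigI => q ql.
    apply: (polyh_le (f := fun z => q.1 (uz z) + (- q.2) * lz z)).
    apply: lin_add; first exact: (lin_comp (hl1 _ ql) (@linmap_uz n)).
    exact: (lin_scal _ (@lin_lz n)).
  - apply: polyh_bigI => q ql.
    apply: (polyh_le (f := fun z => q.1 (xz z - uz z) + q.2 * lz z)).
    apply: lin_add; last exact: (lin_scal _ (@lin_lz n)).
    apply: (lin_comp (f := q.1) (g := fun z => xz z - uz z) (hl2 _ ql)).
    exact: linmapB (@linmap_xz n) (@linmap_uz n).
  - apply: polyhI.
      exact: (polyh_le (f := fun z => (-1) * lz z) _ (lin_scal _ (@lin_lz n))).
    exact: (polyh_le (f := @lz n) _ (@lin_lz n)).
have := proj_polyh pL.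
suff -> : [set @dsubmx R (1 + n) n 1 z | z in A1 `&` A2 `&` (A3 `&` A4)] =
   convC (hsp l1 `|` hsp l2) by [].
apply/seteqP; split.
  move=> _ [z [[H1 H2] [H3 H4]] <-]; rewrite -/(xz z).
  move: H1 H2 H3 H4; rewrite /A1 /A2 /A3 /A4 /=.
  set t := lz z; set u := uz z; set x := xz z => H1 H2 H3 H4.
  have [t0|tn0] := eqVneq t 0.
    have u0 : u = 0.
      apply: (recess hl1 P1p b1) => q ql; have := H1 _ ql; rewrite t0 mulr0 addr0 //.
    apply: convC_sub; right => q ql; have := H2 _ ql.
    by rewrite u0 subr0 t0 mulr0 addr0.
  have [t1|tn1] := eqVneq t 1.
    have xu : x - u = 0.
      apply: (recess hl2 P2p b2) => q ql; have := H2 _ ql; rewrite t1 mulr1; lra.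
    apply: convC_sub; left => q ql; have := H1 _ ql.
    have -> : x = u by apply/eqP; rewrite -subr_eq0 xu.
    by rewrite t1 mulr1; lra.
  have tp : 0 < t by rewrite lt_def tn0; lra.
  have tl : t < 1 by rewrite lt_def eq_sym tn1 /=; lra.
  have t1p : 0 < 1 - t by lra.
  have -> : x = t *: (t^-1 *: u) + (1 - t) *: ((1 - t)^-1 *: (x - u)).
    by rewrite !scalerA !divff ?gt_eqF // !scale1r addrC subrK.
  apply: convC_cvx; [apply: convC_sub; left|apply: convC_sub; right| lra | lra].
    move=> q ql; rewrite /= (linZ (hl1 _ ql)); have := H1 _ ql => h.
    rewrite -(ler_pM2l tp) mulrA divff ?gt_eqF // mul1r; lra.
  move=> q ql; rewrite /= (linZ (hl2 _ ql)); have := H2 _ ql => h.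
  rewrite -(ler_pM2l t1p) mulrA divff ?gt_eqF // mul1r; lra.
apply: convC_min.
  apply: cvx_img; first exact: polyh_cvx.
  exact: linmap_dsub.
move=> x [Px|Px].
  exists (mkz 1 x x); last exact: xz_mk.
  rewrite /A1 /A2 /A3 /A4 /= !lz_mk uz_mk xz_mk subrr; split; split.
  - by move=> q ql; have := Px _ ql; rewrite /= mulr1; lra.
  - by move=> q ql; rewrite (lin0 (hl2 _ ql)) mulr1 add0r.
  - by lra.
  - by [].
exists (mkz 0 0 x); last exact: xz_mk.
rewrite /A1 /A2 /A3 /A4 /= !lz_mk uz_mk xz_mk subr0; split; split.
- by move=> q ql; rewrite (lin0 (hl1 _ ql)) mulr0 addr0.
- by move=> q ql; have := Px _ ql; rewrite /= mulr0 addr0.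
- by rewrite mulr0.
- by rewrite ler01.
Qed.

Lemma convU n (Ps : seq (set (vec n))) :
  (forall P, List.In P Ps -> polyh P /\ bnd P) ->
  polyh (convC [set x | exists P, List.In P Ps /\ P x]).
Proof.
elim: Ps => [|P Ps IH] H.
  have -> : [set x : vec n | exists P, List.In P [::] /\ P x] = set0.
    by apply/seteqP; split => x // [P [[]]].
  by rewrite convC_id; [exact: polyh0 | move=> x y t []].
have -> : [set x | exists Q, List.In Q (P :: Ps) /\ Q x] =
    P `|` [set x | exists Q, List.In Q Ps /\ Q x].
  apply/seteqP; split => x /=.
    by move=> [Q [[<-|QP] Qx]]; [left|right; exists Q].
  by move=> [Px|[Q [QP Qx]]]; [exists P; split => //; left|exists Q; split => //; right].
rewrite convC_congr.
have HPs : forall Q, List.In Q Ps -> polyh Q /\ bnd Q by move=> Q QP; apply: H; right.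
have [[l1 [hl1 e1]] bP] := H P (or_introl erefl).
have [l2 [hl2 e2]] := IH HPs.
have b2 : bnd (convC [set x | exists Q, List.In Q Ps /\ Q x]).
  by apply: bnd_conv; apply: bnd_U => Q QP; have [] := HPs Q QP.
rewrite e1 e2; apply: conv2 => //; first by rewrite -e1.
by rewrite -e2.
Qed.

End Gen4.


Section Top.
Variable R : realType.

Lemma mx_cvg (T : Type) (F : set_system T) (FF : Filter F) k m (M : 'M[R]_(k, m)) i
   (f : T -> 'cV[R]_m) v :
  f @ F --> v -> (M *m f x) i ord0 @[x --> F] --> (M *m v) i ord0.
Proof.
move=> fv; under eq_cvg do rewrite mxE; rewrite mxE.
apply: (@cvg_big _ _ +%R 0 predT (fun x : R * R => add_continuous x)) => // j _.
apply: cvgMl_tmp.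
exact: (cvg_comp _ _ fv (@coord_continuous R m 1 j ord0 v)).
Qed.

Variables n1 n2 : nat.
Local Notation pt := ('cV[R]_n1 * 'cV[R]_n2)%type.

Definition linp (g : pt -> R) := forall a (q r : pt), g (a *: q.1 + r.1, a *: q.2 + r.2) = a * g q + g r.

Lemma int_lin (C : set pt) (g : pt -> R) (beta : R) (v p : pt) :
  linp g -> 0 < g v -> nbhs p C -> (forall q, C q -> beta <= g q) -> beta < g p.
Proof.
move=> hg gv Cp HC.
have hf : (fun t : R => (p.1 - t *: v.1, p.2 - t *: v.2)) @ (nbhs (0 : R)) --> p.
  case: p Cp => p1 p2 Cp /=.
  have h1 : (fun t : R => p1 - t *: v.1) @ (nbhs (0 : R)) --> p1.
    rewrite -[X in _ --> X]subr0; apply: cvgB; first exact: cvg_cst.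
    by rewrite -(scale0r v.1); apply: cvgZr_tmp; exact: cvg_id.
  have h2 : (fun t : R => p2 - t *: v.2) @ (nbhs (0 : R)) --> p2.
    rewrite -[X in _ --> X]subr0; apply: cvgB; first exact: cvg_cst.
    by rewrite -(scale0r v.2); apply: cvgZr_tmp; exact: cvg_id.
  exact: (cvg_pair h1 h2).
have := hf _ Cp => /nbhs_ballP [e e0 He].
have : C (p.1 - (e / 2) *: v.1, p.2 - (e / 2) *: v.2).
  have e0' : 0 < e := e0.
  by apply: He; rewrite -ball_normE /= sub0r normrN ger0_norm; lra.
move=> /HC; have := hg (- (e / 2)) v p.
rewrite !scaleNr ![_ + p.1]addrC ![_ + p.2]addrC => ->.
have e0' : 0 < e := e0.
have : 0 < e / 2 * g v by apply: mulr_gt0 => //; lra.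
lra.
Qed.

End Top.


Lemma addE (R : realType) m n (X Y : 'M[R]_(m, n)) i j : (X + Y) i j = X i j + Y i j.
Proof. by rewrite mxE. Qed.
Lemma oppE (R : realType) m n (X : 'M[R]_(m, n)) i j : (- X) i j = - X i j.
Proof. by rewrite mxE. Qed.
Lemma scaleE (R : realType) m n a (X : 'M[R]_(m, n)) i j : (a *: X) i j = a * X i j.
Proof. by rewrite mxE. Qed.

Section Prob.
Variables (R : realType) (n1 n2 m2 : nat).
Variables (A2 : 'M[rat]_(m2, n1)) (G2 : 'M[rat]_(m2, n2)) (b2 : 'cV[rat]_m2) (w : 'cV[R]_n2).
Local Notation pt := ('cV[R]_n1 * 'cV[R]_n2)%type.

Definition hh i (p : pt) := (mxR A2 *m p.1 + mxR G2 *m p.2) i ord0.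
Definition beta i := (mxR b2 - ones R m2) i ord0 - ((mxR G2 : 'M[R]_(m2, n2)) *m w) i ord0.
Definition gam j := - 1 - w j ord0.
Definition nz i := exists q : pt, hh i q != 0.
Definition strict (p : pt) := (forall i, (nz i -> beta i < hh i p) /\ (~ nz i -> beta i <= 0)) /\
   forall j, gam j < p.2 j ord0.

Lemma C_iff p : C_ID A2 G2 b2 w p <->
  (forall i, beta i <= hh i p) /\ (forall j, gam j <= p.2 j ord0).
Proof.
rewrite /C_ID /leV /beta /hh /gam /=; split.
  move=> [H1 H2]; split => [i|j].
    by have := H1 i; rewrite mulmxDr !addE; lra.
  by have := H2 j; rewrite !addE oppE mxE; lra.
move=> [H1 H2]; split => [i|j].
  by have := H1 i; rewrite mulmxDr !addE; lra.
by have := H2 j; rewrite !addE oppE mxE; lra.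
Qed.

Lemma hh_lin i : linp (hh i).
Proof.
move=> a q r; rewrite /hh !mulmxDr -!scalemxAr !addE !scaleE; ring.
Qed.

Lemma hh0 i : hh i (0, 0) = 0.
Proof. by rewrite /hh !mulmx0 addr0 mxE. Qed.

Lemma nnz i : ~ nz i -> forall q, hh i q = 0.
Proof. by move=> H q; apply/eqP; apply/negP => /negP h; apply: H; exists q. Qed.

Lemma hh_cvg i (p : pt) : hh i q @[q --> p] --> hh i p.
Proof.
case: p => p1 p2; rewrite /hh.
under eq_cvg do rewrite addE; rewrite addE.
apply: cvgD; apply: mx_cvg; [exact: cvg_fst | exact: cvg_snd].
Qed.

Lemma int_iff (p : pt) : interior (C_ID A2 G2 b2 w) p <-> strict p.
Proof.
split.
  move=> Cp; have /C_iff [H1 H2] := nbhs_singleton Cp.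
  split => [i|j]; first split.
  - move=> [q qn]; have [qp|qn'] := ltP 0 (hh i q).
      apply: (int_lin (v := q) (hh_lin i) qp Cp) => r /C_iff [] //.
    have qneg : hh i q < 0 by rewrite lt_neqAle qn qn'.
    pose v : pt := ((-1) *: q.1 + 0, (-1) *: q.2 + 0).
    have hv : hh i v = - hh i q.
      rewrite /v; have := hh_lin i (-1) q (0, 0); rewrite /= hh0 addr0 => ->; ring.
    have vp : 0 < hh i v by rewrite hv; lra.
    apply: (int_lin (v := v) (hh_lin i) vp Cp) => r /C_iff [] //.
  - by move=> nzi; have := H1 i; rewrite nnz.
  pose v : pt := (0, delta_mx j ord0).
  have lg : linp (fun q : pt => q.2 j ord0) by move=> a q r /=; rewrite addE scaleE.
  have vp : 0 < (fun q : pt => q.2 j ord0) v by rewrite /= mxE !eqxx.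
  apply: (int_lin lg vp Cp) => r /C_iff [] //.
move=> [Hs Hj]; rewrite /interior.
have Fi : nbhs p [set q : pt | forall i, beta i <= hh i q].
  apply: (@filter_forall _ 'I_m2 (fun i (q : pt) => beta i <= hh i q) (nbhs p) (nbhs_filter p)) => i.
  have [nzi|nzi] := pselect (nz i).
    apply: (@filterS _ _ (nbhs_filter p) [set t | beta i < hh i t]); first by move=> q /ltW.
    exact: (cvgr_gt _ (@hh_cvg i p) _ (proj1 (Hs i) nzi)).
  apply: (@filterS _ _ (nbhs_filter p) setT); last exact: (@filterT _ _ (nbhs_filter p)).
  by move=> q _; rewrite nnz //; exact: (proj2 (Hs i)).
have Fj : nbhs p [set q : pt | forall j, gam j <= q.2 j ord0].
  apply: (@filter_forall _ 'I_n2 (fun j (q : pt) => gam j <= q.2 j ord0) (nbhs p) (nbhs_filter p)) => j.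
  have hc : (fun q : pt => q.2 j ord0) @ nbhs p --> p.2 j ord0.
    case: p {Hs Hj Fi} => p1 p2 /=.
    apply: (@cvg_comp _ _ _ snd (fun M : 'cV[R]_n2 => M j ord0) _ (nbhs p2)); first exact: cvg_snd.
    exact: (@coord_continuous R n2 1 j ord0 p2).
  apply: (@filterS _ _ (nbhs_filter p) [set t : pt | gam j < t.2 j ord0]); first by move=> q /ltW.
  exact: (cvgr_gt _ hc _ (Hj j)).
have := @filterI _ _ (nbhs_filter p) _ _ Fi Fj.
by apply: (@filterS _ _ (nbhs_filter p)) => q [h1 h2]; apply/C_iff.
Qed.

End Prob.


Section Fin.
Variable R : realType.
Local Notation vec n := 'cV[R]_n.

Lemma memIn (T : eqType) (s : seq T) x : x \in s -> List.In x s.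
Proof.
elim: s => //= a s IH; rewrite in_cons => /orP [/eqP ->|/IH]; [left|right] => //.
Qed.
Lemma In_enum (T : finType) (x : T) : List.In x (enum T).
Proof. by apply: memIn; rewrite mem_enum. Qed.

Lemma lin_repr n (f : vec n -> R) : lin f -> forall x, f x = \sum_j f (delta_mx j ord0) * x j ord0.
Proof.
move=> hf x; rewrite {1}(matrix_sum_delta x) (big_morph f (linD hf) (lin0 hf)).
by apply: eq_bigr => j _; rewrite big_ord1 (linZ hf) mulrC.
Qed.

Lemma polyh_polyhedron n1 n2 (T : set (vec (n1 + n2))) : polyh T ->
  polyhedron [set p : pt R n1 n2 | T (col_mx p.1 p.2)].
Proof.
move=> [l [hl ->]].
pose k := List.length l.
pose d : cns R (n1 + n2) := (fun _ => 0, 0).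
pose f (i : 'I_k) := List.nth i l d.
have fin : forall i : 'I_k, List.In (f i) l.
  by move=> i; apply: List.nth_In; have := ltn_ord i; move/ssrnat.ltP.
pose M := \matrix_(i < k, j < n1 + n2) (f i).1 (delta_mx j ord0).
exists k, (lsubmx M), (rsubmx M), (\col_(i < k) (f i).2).
have key : forall (p : pt R n1 n2) i, (lsubmx M *m p.1 + rsubmx M *m p.2) i ord0 = (f i).1 (col_mx p.1 p.2).
  move=> p i; rewrite -mul_row_col hsubmxK mxE (lin_repr (hl _ (fin i))).
  by apply: eq_bigr => j _; rewrite mxE.
apply/seteqP; split => p /= H.
  by move=> i; rewrite key mxE; apply: H.
move=> q /(fun h => List.In_nth l q d h) [m [mlt <-]].
have mk : (m < k)%N by apply/ssrnat.ltP.
by have := H (Ordinal mk); rewrite key mxE.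
Qed.

Lemma col_sum n1 n2 k (lam : 'I_k -> R) (a : 'I_k -> vec n1) (b : 'I_k -> vec n2) :
  col_mx (\sum_(i < k) lam i *: a i) (\sum_(i < k) lam i *: b i) =
  \sum_(i < k) lam i *: col_mx (a i) (b i).
Proof.
elim: k lam a b => [|k IH] lam a b; first by rewrite !big_ord0 col_mx0.
by rewrite !big_ord_recr /= -add_col_mx IH scale_col_mx.
Qed.

Lemma conv_hull_eq n1 n2 (S : set (pt R n1 n2)) : conv_hull S =
  [set p | convC [set col_mx q.1 q.2 | q in S] (col_mx p.1 p.2)].
Proof.
apply/seteqP; split => p /=.
  move=> [k [lam [q [l0 [l1 [Sq ->]]]]]].
  exists k, lam, (fun i => col_mx (q i).1 (q i).2); split => //; split => //; split.
    by move=> i; exists (q i).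
  by rewrite /= col_sum.
move=> [k [lam [q [l0 [l1 [Sq e]]]]]].
exists k, lam, (fun i => (usubmx (q i), dsubmx (q i))); split => //; split => //; split.
  move=> i; have [[s1 s2] Ss <-] := Sq i; by rewrite col_mxKu col_mxKd.
move: e; rewrite (eq_bigr (fun i => lam i *: col_mx (usubmx (q i)) (dsubmx (q i)))); last first.
  by move=> i _; rewrite vsubmxK.
rewrite -col_sum => /eq_col_mx [<- <-].
by case: p.
Qed.

Lemma lin_entryF N k (F : vec N -> vec k) i : linmap F -> lin (fun z => F z i ord0).
Proof. by move=> hF a x y; rewrite hF addE scaleE. Qed.

Lemma polyh_leV N k (F : vec N -> vec k) (c : vec k) : linmap F ->
  polyh [set z | forall i, F z i ord0 <= c i ord0].
Proof.
move=> hF.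
have -> : [set z | forall i, F z i ord0 <= c i ord0] =
   [set z | forall i, List.In i (enum 'I_k) -> (fun z => F z i ord0) z <= c i ord0].
  by apply/seteqP; split => z /= H i //; apply: H; apply: In_enum.
apply: polyh_bigI => i _; apply: polyh_le; exact: lin_entryF.
Qed.

Lemma linmap_mul m n (M : 'M[R]_(m, n)) : linmap (fun x => M *m x).
Proof. by move=> a x y; rewrite mulmxDr -scalemxAr. Qed.
Lemma linmapD' m n (f g : vec m -> vec n) : linmap f -> linmap g -> linmap (fun x => f x + g x).
Proof. by move=> hf hg a x y; rewrite hf hg scalerDr addrACA. Qed.

Definition Qf n1 n2 k (M : 'M[R]_(k, n1)) (M' : 'M[R]_(k, n2)) (c : vec k) : set (vec (n1 + n2)) :=
  [set z | forall i, (M *m usubmx z + M' *m dsubmx z) i ord0 <= c i ord0].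

Lemma linmap_Q n1 n2 k (M : 'M[R]_(k, n1)) (M' : 'M[R]_(k, n2)) :
  linmap (fun z : vec (n1 + n2) => M *m usubmx z + M' *m dsubmx z).
Proof.
apply: linmapD'.
  exact: (linmap_comp (linmap_mul M) (@linmap_usub R n1 n2)).
exact: (linmap_comp (linmap_mul M') (@linmap_dsub R n1 n2)).
Qed.

Lemma polyh_Q n1 n2 k (M : 'M[R]_(k, n1)) (M' : 'M[R]_(k, n2)) c : polyh (Qf M M' c).
Proof. exact: (polyh_leV c (linmap_Q M M')). Qed.

End Fin.


Section Main.
Variables (R : realType) (n1 n2 m1 m2 : nat).
Variables (A1 : 'M[rat]_(m1, n1)) (G1 : 'M[rat]_(m1, n2)) (b1 : 'cV[rat]_m1).
Variables (A2 : 'M[rat]_(m2, n1)) (G2 : 'M[rat]_(m2, n2)) (b2 : 'cV[rat]_m2).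
Variable w : 'cV[R]_n2.
Local Notation vec n := 'cV[R]_n.
Local Notation P := (Pset R A1 G1 b1 A2 G2 b2).

Definition rho (z : vec (n1 + n2)) : pt R n1 n2 := (usubmx z, dsubmx z).
Definition Pz := [set z | P (rho z)].
Definition pc0 := [set z | (exists i, ~ nz R A2 G2 i /\ 0 < beta G2 b2 w i) /\ Pz z].
Definition pcA i := [set z | nz R A2 G2 i /\ Pz z /\ hh A2 G2 i (rho z) <= beta G2 b2 w i].
Definition pcB j := [set z | Pz z /\ dsubmx z j ord0 <= gam w j].
Definition Ps := pc0 :: List.map pcA (enum 'I_m2) ++ List.map pcB (enum 'I_n2).

Lemma Pz_eq : Pz = Qf (- 1%:M) 0 0 `&` Qf 0 (- 1%:M) 0 `&`
   (Qf (- mxR A1) (- mxR G1) (- mxR b1) `&` Qf (- mxR A2) (- mxR G2) (- mxR b2)).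
Proof.
rewrite /Pz /Pset /Qf /leV /=; apply/seteqP; split => z /=.
  move=> [H1 [H2 [H3 H4]]]; split; [split|split] => i.
  - by have := H1 i; rewrite mulNmx mul1mx mul0mx addr0 oppE !mxE; lra.
  - by have := H2 i; rewrite mulNmx mul1mx mul0mx add0r oppE !mxE; lra.
  - by have := H3 i; rewrite !mulNmx !addE !oppE; lra.
  - by have := H4 i; rewrite !mulNmx !addE !oppE; lra.
move=> [[H1 H2] [H3 H4]]; split; [|split; [|split]] => i.
- by have := H1 i; rewrite mulNmx mul1mx mul0mx addr0 oppE !mxE; lra.
- by have := H2 i; rewrite mulNmx mul1mx mul0mx add0r oppE !mxE; lra.
- by have := H3 i; rewrite !mulNmx !addE !oppE; lra.
- by have := H4 i; rewrite !mulNmx !addE !oppE; lra.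
Qed.

Lemma polyh_Pz : polyh Pz.
Proof. by rewrite Pz_eq; apply: polyhI; apply: polyhI; apply: polyh_Q. Qed.

Lemma bnd_Pz : bounded_pts P -> bnd Pz.
Proof.
move=> [B HB]; exists B => z Pzz i.
have [H1 H2] := HB _ Pzz.
case: (splitP i) => k ik.
  have -> : i = lshift n2 k by apply: val_inj.
  by have := H1 k; rewrite /rho /= mxE.
have -> : i = rshift n1 k by apply: val_inj.
by have := H2 k; rewrite /rho /= mxE.
Qed.

Lemma polyh_cases (Q : Prop) (S : set (vec (n1 + n2))) :
  polyh S -> polyh [set z | Q /\ S z].
Proof.
move=> pS; have [q|nq] := pselect Q.
  by have -> : [set z | Q /\ S z] = S by apply/seteqP; split => z /= => [[]|].
have -> : [set z | Q /\ S z] = set0 by apply/seteqP; split => z //= [].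
exact: polyh0.
Qed.

Lemma lin_hh i : lin (fun z : vec (n1 + n2) => hh A2 G2 i (rho z)).
Proof. exact: (lin_entryF i (linmap_Q (mxR A2) (mxR G2))). Qed.

Lemma pieces_ok : bounded_pts P -> forall Q, List.In Q Ps -> polyh Q /\ bnd Q.
Proof.
move=> hb Q [<-|/List.in_app_iff [/List.in_map_iff [i [<- _]]|/List.in_map_iff [j [<- _]]]].
- split; first exact: (polyh_cases _ polyh_Pz).
  by apply: (bnd_sub _ (bnd_Pz hb)) => z [].
- split.
    have -> : pcA i = [set z | nz R A2 G2 i /\ (Pz `&` [set z | hh A2 G2 i (rho z) <= beta G2 b2 w i]) z].
      by apply/seteqP; split => z /= [? [? ?]].
    apply: polyh_cases; apply: polyhI; first exact: polyh_Pz.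
    exact: (polyh_le _ (lin_hh i)).
  by apply: (bnd_sub _ (bnd_Pz hb)) => z [_ []].
split.
  have -> : pcB j = Pz `&` [set z | dsubmx z j ord0 <= gam w j] by [].
  apply: polyhI; first exact: polyh_Pz.
  exact: (polyh_le _ (lin_entryF j (@linmap_dsub R n1 n2))).
by apply: (bnd_sub _ (bnd_Pz hb)) => z [].
Qed.

Lemma rho_col (p : pt R n1 n2) : rho (col_mx p.1 p.2) = p.
Proof. by rewrite /rho col_mxKu col_mxKd; case: p. Qed.

Lemma S0_eq : [set col_mx q.1 q.2 | q in P `\` interior (C_ID A2 G2 b2 w)] =
  [set z | exists Q, List.In Q Ps /\ Q z].
Proof.
apply/seteqP; split => z /=.
  move=> [p [Pp nint] <-].
  have ns : ~ strict A2 G2 b2 w p by move=> /int_iff.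
  have Pzp : Pz (col_mx p.1 p.2) by rewrite /Pz /= rho_col.
  have [Hj|Hj] := pselect (forall j, gam w j < p.2 j ord0).
    have : ~ (forall i, (nz R A2 G2 i -> beta G2 b2 w i < hh A2 G2 i p) /\
                    (~ nz R A2 G2 i -> beta G2 b2 w i <= 0)) by move=> H; apply: ns.
    move=> /existsNP [i /not_andP Hi].
    have [nzi|nzi] := pselect (nz R A2 G2 i).
      exists (pcA i); split.
        by right; apply/List.in_app_iff; left; apply/List.in_map_iff; exists i; split => //; apply: In_enum.
      split => //; split => //; rewrite rho_col.
      by case: Hi => H; [rewrite leNgt; apply/negP => h; apply: H | exfalso; apply: H].
    exists pc0; split; first by left.
    split => //; exists i; split => //.
    case: Hi => H; first by exfalso; apply: H.
    by rewrite ltNge; apply/negP => h; apply: H.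
  move: Hj => /existsNP [j Hj].
  exists (pcB j); split.
    by right; apply/List.in_app_iff; right; apply/List.in_map_iff; exists j; split => //; apply: In_enum.
  split => //; rewrite col_mxKd leNgt; apply/negP => h; exact: Hj.
move=> [Q [HQ Qz]].
exists (rho z); last by rewrite /rho /= vsubmxK.
have HPz : forall Q, List.In Q Ps -> Q z -> Pz z.
  by move=> Q' [<-|/List.in_app_iff [/List.in_map_iff [i [<- _]]|/List.in_map_iff [j [<- _]]]] => [[]|[_ []]|[]].
split; first exact: (HPz Q HQ Qz).
move=> /int_iff [Hs Hj].
move: HQ Qz => [<-|/List.in_app_iff [/List.in_map_iff [i [<- _]]|/List.in_map_iff [j [<- _]]]].
- move=> [[i [nzi bi]] _]; have := (proj2 (Hs i)) nzi; lra.
- move=> [nzi [_ hi]]; have := (proj1 (Hs i)) nzi; lra.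
- move=> [_ hj]; have := Hj j; rewrite /rho /=; lra.
Qed.

Theorem main_gen : bounded_pts P ->
  polyhedron (conv_hull (P `\` interior (C_ID A2 G2 b2 w))).
Proof.
move=> hb; rewrite conv_hull_eq S0_eq.
apply: polyh_polyhedron; apply: convU; exact: pieces_ok.
Qed.

End Main.


Unset Implicit Arguments.

Theorem proposition3 (R : realType) (n1 n2 m1 m2 r1 r2 : nat)
  (d2 : 'rV[rat]_n2)
  (A1 : 'M[rat]_(m1, n1)) (G1 : 'M[rat]_(m1, n2)) (b1 : 'cV[rat]_m1)
  (A2 : 'M[rat]_(m2, n1)) (G2 : 'M[rat]_(m2, n2)) (b2 : 'cV[rat]_m2)
  (hr1 : (r1 <= n1)%N) (hr2 : (r2 <= n2)%N)
  (hbnd : bounded_pts (Pset R A1 G1 b1 A2 G2 b2))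
  (w : 'cV[R]_n2) (hw : improving r2 d2 w) :
  polyhedron (conv_hull (Pset R A1 G1 b1 A2 G2 b2 `\` interior (C_ID A2 G2 b2 w))).
Proof.
exact: (main_gen w hbnd).
Qed.
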